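(* Let $r\ge3$ and $Y,Z\subseteq\{1,\dots,r-1\}$ with $0\le|Y|<|Z|<r$. For a finite $\Lambda$ write $\sigma_i(\pm\Lambda)$ where $\sigma_i$ is the map defined by $C_\Lambda$ and $\pm\Lambda=\Lambda\cup-\Lambda$, and let $(i\ i{+}1)$ denote the transposition acting on subsets of $\{1,\dots,r-1\}$. Then: for $i=1,\dots,r-2$: $\sigma_i(\pm\Phi_{r,Z})=\pm\Phi_{r,(i\,i+1)(Z)}$, $\sigma_i(\pm\Psi_{r,Y})=\pm\Psi_{r,(i\,i+1)(Y)}$, $\sigma_i(\pm\Psi'_{r,Y})=\pm\Psi'_{r,(i\,i+1)(Y)}$; if $r-1\notin Z$: $\sigma_{r-1}(\pm\Phi_{r,Z})=\sigma_r(\pm\Phi_{r,Z})=\pm\Phi_{r,Z}$; if $r-1\in Z$: $\sigma_{r-1}(\pm\Phi_{r,Z})=\pm\Psi_{r,Z\setminus\{r-1\}}$ and $\sigma_r(\pm\Phi_{r,Z})=\pm\Psi'_{r,Z\setminus\{r-1\}}$; if $r-1\notin Y$: $\sigma_{r-1}(\pm\Psi_{r,Y})=\pm\Phi_{r,Y\cup\{r-1\}}$, $\sigma_r(\pm\Psi_{r,Y})=\pm\Psi_{r,Y}$, $\sigma_r(\pm\Psi'_{r,Y})=\pm\Phi_{r,Y\cup\{r-1\}}$, $\sigma_{r-1}(\pm\Psi'_{r,Y})=\pm\Psi'_{r,Y}$; if $r-1\in Y$: $\sigma_{r-1}(\pm\Psi_{r,Y})=\sigma_r(\pm\Psi_{r,Y})=\pm\Psi_{r,Y}$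 and $\sigma_{r-1}(\pm\Psi'_{r,Y})=\sigma_r(\pm\Psi'_{r,Y})=\pm\Psi'_{r,Y}$.
   Context: In $\mathbb{Z}^r$ with standard basis $\alpha_1,\dots,\alpha_r$ let $\eta_{i,j}=\sum_{k=i}^j\alpha_k$ for $i\le j$, $\eta_{i,j}=0$ for $i>j$. $\Phi_{r,Z}$ ($Z\subseteq\{1,\dots,r-1\}$) consists of $\eta_{i,j-1}$ ($1\le i<j\le r$), $\eta_{i,r-2}+\alpha_r$ ($1\le i<r$), $\eta_{i,r}+\eta_{j,r-2}$ ($1\le i<j<r$), $\eta_{j,r}+\eta_{j,r-2}$ ($j\in Z$). $\Psi_{r,Y}$ consists of $\eta_{i,j}$ ($1\le i\le j\le r$), $\eta_{i,r}+\eta_{j,r-1}$ ($1\le i<j<r$), $\eta_{j,r}+\eta_{j,r-1}$ ($j\in Y$). $\Psi'_{r,Y}$ is obtained from $\Psi_{r,Y}$ by exchanging the coordinates of $\alpha_{r-1}$ and $\alpha_r$. For finite $\Lambda\subseteq\mathbb{Z}^r$, $C_\Lambda=(c_{ij})$ with $c_{ii}=2$, $c_{ij}=-\max\{k\ge0:k\alpha_i+\alpha_j\in\Lambda\}$ ($i\ne j$), and $\sigma_i:\mathbb{Z}^r\to\mathbb{Z}^r$, $\sigma_i(\alpha_j)=\alpha_j-c_{ij}\alpha_i$. *)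

(* Defs.v *)
From HB Require Import structures.
From mathcomp Require Import all_boot all_order all_algebra.
Set Implicit Arguments. Unset Strict Implicit. Unset Printing Implicit Defensive.
Import Order.TTheory GRing.Theory Num.Theory.
Local Open Scope ring_scope.

(* Vectors of Z^r are finite functions 'I_r -> int; the
   paper's 1-based coordinate k (1 <= k <= r) is the ordinal l with l.+1 = k. *)
Definition vec (r : nat) := {ffun 'I_r -> int}.

(* coordinate with the paper's 1-based index k (0 if out of range) *)
Definition vat {r} (v : vec r) (k : nat) : int :=
  if insub k.-1 is Some l then (if k == 0%N then 0 else v l) else 0.

Definition alpha r (k : nat) : vec r := [ffun l : 'I_r => ((l.+1 == k) : nat)%:Z].

(* eta_{i,j} = sum_{k=i}^j alpha_k  (= 0 if i > j) *)
Definition eta r (i j : nat) : vec r :=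
  [ffun l : 'I_r => (((i <= l.+1) && (l.+1 <= j))%N : nat)%:Z].

Definition vadd r (u v : vec r) : vec r := [ffun l => u l + v l].
Definition vopp r (u : vec r) : vec r := [ffun l => - u l].
Definition vscale r (k : int) (u : vec r) : vec r := [ffun l => k * u l].

(* subsets Y, Z of {1,...,r-1} are encoded as {set 'I_r} with 0 excluded;
   membership of a 1-based... here the set elements are the numbers val x *)
Definition inS r (Z : {set 'I_r}) (k : nat) : bool := [exists x in Z, val x == k].

Definition swapn (i k : nat) : nat :=
  if k == i then i.+1 else if k == i.+1 then i else k.

Definition tsp r (i : nat) (Z : {set 'I_r}) : {set 'I_r} :=
  [set x : 'I_r | [exists y in Z, swapn i (val y) == val x]].

Definition setDel r (Z : {set 'I_r}) (k : nat) : {set 'I_r} :=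
  [set x in Z | val x != k].
Definition setAdd r (Z : {set 'I_r}) (k : nat) : {set 'I_r} :=
  [set x : 'I_r | (x \in Z) || (val x == k)].

Definition Phi r (Z : {set 'I_r}) : seq (vec r) :=
  [seq eta r i j.-1 | i <- iota 1 r, j <- iota i.+1 (r - i)]
  ++ [seq vadd (eta r i (r - 2)) (alpha r r) | i <- iota 1 (r - 1)]
  ++ [seq vadd (eta r i r) (eta r j (r - 2)) | i <- iota 1 r, j <- iota i.+1 (r - 1 - i)]
  ++ [seq vadd (eta r j r) (eta r j (r - 2)) | j <- iota 1 (r - 1) & inS Z j].

Definition Psi r (Y : {set 'I_r}) : seq (vec r) :=
  [seq eta r i j | i <- iota 1 r, j <- iota i (r.+1 - i)]
  ++ [seq vadd (eta r i r) (eta r j (r - 1)) | i <- iota 1 r, j <- iota i.+1 (r - 1 - i)]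
  ++ [seq vadd (eta r j r) (eta r j (r - 1)) | j <- iota 1 (r - 1) & inS Y j].

Definition xch r (v : vec r) : vec r :=
  [ffun l : 'I_r => vat v (swapn (r - 1) l.+1)].

Definition Psi' r (Y : {set 'I_r}) : seq (vec r) := map (@xch r) (Psi Y).

(* C_Lambda entries, 1-based indices:
   c_ii = 2, c_ij = - max { k >= 0 : k alpha_i + alpha_j \in Lambda }.
   Every such k is the absolute value of a coordinate of an element of
   Lambda, hence k < bound Lambda, so the max over k < bound is the max of
   the whole set (0 if the set is empty). *)
Definition bound r (L : seq (vec r)) : nat :=
  (\sum_(x <- L) \sum_(l : 'I_r) `|x l|)%N.+1.

Definition cartan r (L : seq (vec r)) (i j : nat) : int :=
  if i == j then 2
  else - ((\max_(k < bound L | vadd (vscale k%:Z (alpha r i)) (alpha r j) \in L) k)%N)%:Z.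

(* sigma_i(alpha_j) = alpha_j - c_ij alpha_i, extended linearly *)
Definition sigma r (L : seq (vec r)) (i : nat) (v : vec r) : vec r :=
  [ffun l : 'I_r => v l - (\sum_(m : 'I_r) cartan L i m.+1 * v m) * alpha r i l].

Definition pm r (L : seq (vec r)) : seq (vec r) := L ++ map (@vopp r) L.

Definition sigmaPM r (L : seq (vec r)) (i : nat) : seq (vec r) :=
  map (sigma L i) (pm L).

(* Main.v *)
Require Import Defs.
From HB Require Import structures.
From mathcomp Require Import all_boot all_order all_algebra.
From mathcomp Require Import zify ring lra.
Set Implicit Arguments. Unset Strict Implicit. Unset Printing Implicit Defensive.
Import Order.TTheory GRing.Theory Num.Theory.
Local Open Scope ring_scope.
Local Notation eta := Defs.eta.
Ltac noif t := lazymatch t with context [if _ then _ else _] => fail | _ => idtac end.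
Ltac dpll := repeat (match goal with
 | |- context [(?x == ?y :> nat)] => noif x; noif y; case: (@eqP nat x y) => ?
 | |- context [(?x <= ?y)%N] => noif x; noif y; case: (leqP x y) => ?
 | |- context [inS ?Z ?k] => case: (inS Z k)
 end; simpl; try done; try (exfalso; lia)); try lia.

Section SA.
Variable r : nat.

Lemma vat_ffun (G : nat -> int) t :
  vat [ffun l : 'I_r => G l.+1] t = if ((1 <= t) && (t <= r))%N then G t else 0.
Proof.
rewrite /vat; case: t => [|t] /=; first by case: insubP.
case: insubP => [l lt E|]; rewrite ?ffunE /=.
  by rewrite E lt.
by move=> /negbTE ->.
Qed.

Lemma vatE_eta a b t : vat (eta r a b) t = (((1 <= t) && (t <= r) && (a <= t) && (t <= b))%N : nat)%:Z.
Proof. rewrite /eta (vat_ffun (fun t => (((a <= t) && (t <= b))%N : nat)%:Z)). by case: ifP => //= ->. Qed.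
Lemma vatE_alpha k t : vat (alpha r k) t = (((1 <= t) && (t <= r) && (t == k))%N : nat)%:Z.
Proof. rewrite /alpha (vat_ffun (fun t => ((t == k)%N : nat)%:Z)). by case: ifP => //= ->. Qed.
Lemma vatE_add (u v : vec r) t : vat (vadd u v) t = vat u t + vat v t.
Proof. rewrite /vat; case: insubP => //= *; case: eqP => //=; rewrite ?ffunE //. Qed.
Lemma vatE_opp (u : vec r) t : vat (vopp u) t = - vat u t.
Proof. rewrite /vat; case: insubP => //= *; case: eqP => //=; rewrite ?ffunE //. Qed.
Lemma vatE_scale k (u : vec r) t : vat (vscale k u) t = k * vat u t.
Proof. rewrite /vat; case: insubP => //= *; rewrite ?mulr0 //; case: eqP => //=; rewrite ?ffunE ?mulr0 //. Qed.

Lemma vec_ext (u v : vec r) : (forall t, (1 <= t <= r)%N -> vat u t = vat v t) -> u = v.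
Proof.
move=> H; apply/ffunP => l; have := H l.+1 (ltn_ord l).
rewrite /vat /=. have lt : (l < r)%N by [].
case: insubP => [l' _ E|]; last by rewrite lt.
by have -> : l' = l by apply: val_inj.
Qed.

Definition vatE := (vatE_eta, vatE_alpha, vatE_add, vatE_opp, vatE_scale).



Definition Q (L : seq (vec r)) i j k := vadd (vscale k%:Z (alpha r i)) (alpha r j) \in L.

Lemma mem_leq_sum (L : seq (vec r)) (F : vec r -> nat) x : x \in L -> (F x <= \sum_(y <- L) F y)%N.
Proof.
elim: L => //= y L IH; rewrite in_cons big_cons => /orP[/eqP->|/IH H]; first exact: leq_addr.
exact: leq_trans H (leq_addl _ _).
Qed.

Lemma Q_bound L i j k : i != j -> (1 <= i <= r)%N -> Q L i j k -> (k < bound L)%N.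
Proof.
move=> nij /andP[i1 ir] HQ; rewrite /bound ltnS.
have li : (i.-1 < r)%N by lia.
rewrite /Q in HQ; set x := vadd _ _ in HQ.
have Hx : x (Ordinal li) = k%:Z.
  rewrite /x !ffunE /= (_ : i.-1.+1 = i) ?eqxx; last lia.
  by rewrite (negbTE nij) mulr1 addr0.
apply: leq_trans (mem_leq_sum (fun y => \sum_(l : 'I_r) `|y l|)%N HQ).
rewrite (bigD1 (Ordinal li)) //= Hx /=; exact: leq_addr.
Qed.

Lemma cartan_eqQ L L' i j i' j' : i != j -> i' != j' -> (1 <= i <= r)%N -> (1 <= i' <= r)%N ->
  (forall k, Q L i j k = Q L' i' j' k) -> cartan L i j = cartan L' i' j'.
Proof.
move=> nij nij' Hi Hi' HQ; rewrite /cartan (negbTE nij) (negbTE nij'); congr (- (_%:Z)).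
apply/eqP; rewrite eqn_leq; apply/andP; split; apply/bigmax_leqP => k Hk.
  have Hk' : Q L' i' j' k by rewrite -HQ.
  exact: (leq_bigmax_cond (Ordinal (Q_bound nij' Hi' Hk'))).
have Hk' : Q L i j k by rewrite HQ.
exact: (leq_bigmax_cond (Ordinal (Q_bound nij Hi Hk'))).
Qed.

Lemma cartan_val L i j (N : nat) : i != j -> (1 <= i <= r)%N ->
  (forall k, Q L i j k -> (k <= N)%N) -> (N = 0%N \/ Q L i j N) -> cartan L i j = - N%:Z.
Proof.
move=> nij Hi Hle HN; rewrite /cartan (negbTE nij); congr (- (_%:Z)).
apply/eqP; rewrite eqn_leq; apply/andP; split; first by apply/bigmax_leqP => k Hk; exact: Hle.
case: HN => [->//|HN]; exact: (leq_bigmax_cond (Ordinal (Q_bound nij Hi HN))).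
Qed.

Lemma vopp_inv (v : vec r) : vopp (vopp v) = v.
Proof. by apply/ffunP => l; rewrite !ffunE opprK. Qed.

Lemma pm_l (L : seq (vec r)) v : v \in L -> v \in pm L.
Proof. by rewrite /pm mem_cat => ->. Qed.
Lemma pm_r (L : seq (vec r)) v : v \in L -> vopp v \in pm L.
Proof. by rewrite /pm mem_cat => H; rewrite (map_f (@vopp r) H) orbT. Qed.
Lemma pm_ind (L : seq (vec r)) (P : vec r -> Prop) :
  (forall v, v \in L -> P v) -> (forall v, v \in L -> P (vopp v)) -> forall v, v \in pm L -> P v.
Proof. move=> H1 H2 v; rewrite /pm mem_cat => /orP[/H1//|/mapP[w Hw ->]]; exact: H2. Qed.

Lemma Phi1 Z a b : (1 <= a)%N -> (a <= b)%N -> (b < r)%N -> eta r a b \in Phi Z.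
Proof.
move=> *; rewrite /Phi mem_cat; apply/orP; left.
apply/allpairsPdep; exists a, b.+1; rewrite !mem_iota; split => //; lia.
Qed.
Lemma Phi2 Z a : (1 <= a)%N -> (a < r)%N -> vadd (eta r a (r - 2)) (alpha r r) \in Phi Z.
Proof.
move=> *; rewrite /Phi !mem_cat; apply/orP; right; apply/orP; left.
apply/mapP; exists a => //; rewrite mem_iota; lia.
Qed.
Lemma Phi3 Z a b : (1 <= a)%N -> (a < b)%N -> (b < r)%N -> vadd (eta r a r) (eta r b (r - 2)) \in Phi Z.
Proof.
move=> *; rewrite /Phi !mem_cat; apply/orP; right; apply/orP; right; apply/orP; left.
apply/allpairsPdep; exists a, b; rewrite !mem_iota; split => //; lia.
Qed.
Lemma Phi4 Z b : (1 <= b)%N -> (b < r)%N -> inS Z b -> vadd (eta r b r) (eta r b (r - 2)) \in Phi Z.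
Proof.
move=> *; rewrite /Phi !mem_cat; apply/orP; right; apply/orP; right; apply/orP; right.
apply/mapP; exists b => //; rewrite mem_filter mem_iota; apply/andP; split => //; lia.
Qed.
Lemma Phi_ind Z (P : vec r -> Prop) :
  (forall a b, (1 <= a)%N -> (a <= b)%N -> (b < r)%N -> P (eta r a b)) ->
  (forall a, (1 <= a)%N -> (a < r)%N -> P (vadd (eta r a (r - 2)) (alpha r r))) ->
  (forall a b, (1 <= a)%N -> (a < b)%N -> (b < r)%N -> P (vadd (eta r a r) (eta r b (r - 2)))) ->
  (forall b, (1 <= b)%N -> (b < r)%N -> inS Z b -> P (vadd (eta r b r) (eta r b (r - 2)))) ->
  forall v, v \in Phi Z -> P v.
Proof.
move=> H1 H2 H3 H4 v; rewrite /Phi !mem_cat => /or4P[].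
- case/allpairsPdep => a [j [Ha Hj ->]]; move: Ha Hj; rewrite !mem_iota => *; apply: H1; lia.
- case/mapP => a Ha ->; move: Ha; rewrite !mem_iota => *; apply: H2; lia.
- case/allpairsPdep => a [j [Ha Hj ->]]; move: Ha Hj; rewrite !mem_iota => *; apply: H3; lia.
- case/mapP => b; rewrite mem_filter mem_iota => /andP[Hb ?] ->; apply: H4 => //; lia.
Qed.

Lemma Psi1 Y a b : (1 <= a)%N -> (a <= b)%N -> (b <= r)%N -> eta r a b \in Psi Y.
Proof.
move=> *; rewrite /Psi mem_cat; apply/orP; left.
apply/allpairsPdep; exists a, b; rewrite !mem_iota; split => //; lia.
Qed.
Lemma Psi2 Y a b : (1 <= a)%N -> (a < b)%N -> (b < r)%N -> vadd (eta r a r) (eta r b (r - 1)) \in Psi Y.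
Proof.
move=> *; rewrite /Psi !mem_cat; apply/orP; right; apply/orP; left.
apply/allpairsPdep; exists a, b; rewrite !mem_iota; split => //; lia.
Qed.
Lemma Psi3 Y b : (1 <= b)%N -> (b < r)%N -> inS Y b -> vadd (eta r b r) (eta r b (r - 1)) \in Psi Y.
Proof.
move=> *; rewrite /Psi !mem_cat; apply/orP; right; apply/orP; right.
apply/mapP; exists b => //; rewrite mem_filter mem_iota; apply/andP; split => //; lia.
Qed.
Lemma Psi_ind Y (P : vec r -> Prop) :
  (forall a b, (1 <= a)%N -> (a <= b)%N -> (b <= r)%N -> P (eta r a b)) ->
  (forall a b, (1 <= a)%N -> (a < b)%N -> (b < r)%N -> P (vadd (eta r a r) (eta r b (r - 1)))) ->
  (forall b, (1 <= b)%N -> (b < r)%N -> inS Y b -> P (vadd (eta r b r) (eta r b (r - 1)))) ->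
  forall v, v \in Psi Y -> P v.
Proof.
move=> H1 H2 H3 v; rewrite /Psi !mem_cat => /or3P[].
- case/allpairsPdep => a [j [Ha Hj ->]]; move: Ha Hj; rewrite !mem_iota => *; apply: H1; lia.
- case/allpairsPdep => a [j [Ha Hj ->]]; move: Ha Hj; rewrite !mem_iota => *; apply: H2; lia.
- case/mapP => b; rewrite mem_filter mem_iota => /andP[Hb ?] ->; apply: H3 => //; lia.
Qed.

Lemma vat_eta_in a b t : (1 <= t <= r)%N -> vat (eta r a b) t = (((a <= t) && (t <= b))%N : nat)%:Z.
Proof. by move=> H; rewrite vatE_eta H. Qed.
Lemma vat_alpha_in k t : (1 <= t <= r)%N -> vat (alpha r k) t = ((t == k)%N : nat)%:Z.
Proof. by move=> H; rewrite vatE_alpha H. Qed.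
Lemma vatQ k i j t : (1 <= t <= r)%N ->
  vat (vadd (vscale k%:Z (alpha r i)) (alpha r j)) t = k%:Z * ((t == i) : nat)%:Z + ((t == j) : nat)%:Z.
Proof. by move=> H; rewrite vatE_add vatE_scale !vat_alpha_in. Qed.

Lemma Qfacts (g : vec r) k i j : (1 <= i <= r)%N -> (1 <= j <= r)%N -> i != j ->
  g = vadd (vscale k%:Z (alpha r i)) (alpha r j) ->
  [/\ vat g i = k%:Z, vat g j = 1 &
      forall t, (1 <= t <= r)%N -> t != i -> t != j -> vat g t = 0].
Proof.
move=> Hi Hj nij ->; split.
- by rewrite vatQ // eqxx (negbTE nij) mulr1 addr0.
- by rewrite vatQ // eqxx eq_sym (negbTE nij) mulr0 add0r.
- by move=> t Ht /negbTE H1 /negbTE H2; rewrite vatQ // H1 H2 mulr0 addr0.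
Qed.
End SA.


Section SC.
Variable r : nat.
Hypothesis hr : (3 <= r)%N.

Definition NPhi (Z : {set 'I_r}) i j : nat :=
 (if (j == i.+1) && (j <= r-1) then 1 else if (i == j.+1) && (i <= r-1) then 1 else
  if ((i == r-2) && (j == r)) || ((i == r) && (j == r-2)) then 1 else
  if inS Z (r-1) && (((i==r-1)&&(j==r)) || ((i==r)&&(j==r-1))) then 1 else 0)%N.

Lemma NPhi_ge1 Z i j : (1 <= NPhi Z i j)%N = [|| (j == i.+1) && (j <= r-1), (i == j.+1) && (i <= r-1),
  ((i == r-2) && (j == r)) || ((i == r) && (j == r-2)) | inS Z (r-1) && (((i==r-1)&&(j==r)) || ((i==r)&&(j==r-1)))]%N.
Proof. by rewrite /NPhi; do 4 case: ifP => //. Qed.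

Lemma NPhi_adj Z i j : (j = i.+1 /\ j <= r-1 \/ i = j.+1 /\ i <= r-1)%N -> (1 <= NPhi Z i j)%N.
Proof. move=> [H|H]; rewrite NPhi_ge1; apply/or4P; [constructor 1|constructor 2]; lia. Qed.
Lemma NPhi_fork Z i j : (i = r-2 /\ j = r \/ i = r /\ j = r - 2)%N -> (1 <= NPhi Z i j)%N.
Proof. move=> H; rewrite NPhi_ge1; apply/or4P; constructor 3; lia. Qed.
Lemma NPhi_Z Z i j : inS Z (r-1) -> (i = r-1 /\ j = r \/ i = r /\ j = r - 1)%N -> (1 <= NPhi Z i j)%N.
Proof. move=> HZ H; rewrite NPhi_ge1 HZ /=; apply/or4P; constructor 4; lia. Qed.

Lemma F0' (g : vec r) k i j : (1 <= i <= r)%N -> (1 <= j <= r)%N -> i != j ->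
  g = vadd (vscale k%:Z (alpha r i)) (alpha r j) ->
  [/\ vat g i = k%:Z, vat g j = 1 &
      forall t, (1 <= t <= r)%N -> vat g t = 0 \/ t = i \/ t = j].
Proof.
move=> Hi Hj nij E; have [F1 F2 F3] := Qfacts Hi Hj nij E; split => // t Ht.
case: (eqVneq t i) => [->|ti]; first by right; left.
case: (eqVneq t j) => [->|tj]; first by right; right.
by left; apply: F3.
Qed.

Lemma ubPhi1 k i j a b : (0 < k)%N -> (1 <= i <= r)%N -> (1 <= j <= r)%N -> i != j ->
  (1 <= a)%N -> (a <= b)%N -> (b < r)%N ->
  eta r a b = vadd (vscale k%:Z (alpha r i)) (alpha r j) ->
  (k = 1 /\ (j = i.+1 /\ j <= r-1 \/ i = j.+1 /\ i <= r-1))%N.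
Proof.
move=> k0 Hi Hj nij Ha Hab Hb E; have [Fi Fj F0] := F0' Hi Hj nij E.
rewrite !vat_eta_in // in Fi Fj.
have [t1 [Ht1 Et1]] : exists t, (1 <= t <= r)%N /\ (t = (minn i j).+1).
  exists (minn i j).+1; split => //; move/eqP: nij; lia.
have := F0 t1 Ht1; rewrite vat_eta_in //.
move/eqP: nij => nij. clear E F0. lia.
Qed.

Lemma vat_Phi2 a t : (1 <= t <= r)%N -> vat (vadd (eta r a (r-2)) (alpha r r)) t
   = (((a <= t) && (t <= r - 2))%N : nat)%:Z + ((t == r) : nat)%:Z.
Proof. by move=> H; rewrite vatE_add vat_eta_in // vat_alpha_in. Qed.
Lemma vat_eta2 a b c d t : (1 <= t <= r)%N -> vat (vadd (eta r a b) (eta r c d)) t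
   = (((a <= t) && (t <= b))%N : nat)%:Z + (((c <= t) && (t <= d))%N : nat)%:Z.
Proof. by move=> H; rewrite vatE_add !vat_eta_in. Qed.

Lemma ubPhi2 k i j a : (0 < k)%N -> (1 <= i <= r)%N -> (1 <= j <= r)%N -> i != j ->
  (1 <= a)%N -> (a < r)%N ->
  vadd (eta r a (r - 2)) (alpha r r) = vadd (vscale k%:Z (alpha r i)) (alpha r j) ->
  (k = 1 /\ (i = r-2 /\ j = r \/ i = r /\ j = r - 2))%N.
Proof.
move=> k0 Hi Hj nij Ha Hb E; have [Fi Fj F0] := F0' Hi Hj nij E.
rewrite !vat_Phi2 // in Fi Fj.
have H1 := F0 r ltac:(lia); have H2 := F0 a ltac:(lia); have H3 := F0 a.+1 ltac:(lia).
rewrite vat_Phi2 in H1; [|lia]; rewrite vat_Phi2 in H2; [|lia]; rewrite vat_Phi2 in H3; [|lia].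
move/eqP: nij => nij. clear E F0.
case: H1 => [H1|[Er|Er]]; first by exfalso; lia.
- subst i. have k1 : k = 1%N by lia.
  subst k. lia.
- subst j. lia.
Qed.

Lemma ubPhi3 k i j a b : (0 < k)%N -> (1 <= i <= r)%N -> (1 <= j <= r)%N -> i != j ->
  (1 <= a)%N -> (a < b)%N -> (b < r)%N ->
  vadd (eta r a r) (eta r b (r - 2)) = vadd (vscale k%:Z (alpha r i)) (alpha r j) -> False.
Proof.
move=> k0 Hi Hj nij Ha Hab Hb E; have [Fi Fj F0] := F0' Hi Hj nij E.
rewrite !vat_eta2 // in Fi Fj.
have H1 := F0 r ltac:(lia); have H2 := F0 a ltac:(lia); have H3 := F0 (r-1)%N ltac:(lia).
rewrite vat_eta2 in H1; [|lia]; rewrite vat_eta2 in H2; [|lia]; rewrite vat_eta2 in H3; [|lia].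
move/eqP: nij => nij. clear E F0.
case: H1 => [H1|[H1|H1]]; [exfalso; lia| |]; case: H3 => [H3|[H3|H3]]; [exfalso;lia| | | exfalso;lia| |]; lia.
Qed.

Lemma ubPhi4 k i j b : (0 < k)%N -> (1 <= i <= r)%N -> (1 <= j <= r)%N -> i != j ->
  (1 <= b)%N -> (b < r)%N ->
  vadd (eta r b r) (eta r b (r - 2)) = vadd (vscale k%:Z (alpha r i)) (alpha r j) ->
  (k = 1 /\ b = r - 1 /\ (i = r-1 /\ j = r \/ i = r /\ j = r - 1))%N.
Proof.
move=> k0 Hi Hj nij Ha Hb E; have [Fi Fj F0] := F0' Hi Hj nij E.
rewrite !vat_eta2 // in Fi Fj.
have H1 := F0 r ltac:(lia); have H2 := F0 b ltac:(lia); have H3 := F0 (r-1)%N ltac:(lia).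
rewrite vat_eta2 in H1; [|lia]; rewrite vat_eta2 in H2; [|lia]; rewrite vat_eta2 in H3; [|lia].
move/eqP: nij => nij. clear E F0.
case: H1 => [H1|[H1|H1]]; [exfalso; lia| |]; case: H3 => [H3|[H3|H3]]; [exfalso;lia| | | exfalso;lia| |]; lia.
Qed.

Lemma ubPhi Z k i j : (1 <= i <= r)%N -> (1 <= j <= r)%N -> i != j ->
  Q (Phi Z) i j k -> (k <= NPhi Z i j)%N.
Proof.
move=> Hi Hj nij; case: k => [//|k]; rewrite /Q.
set w := vadd _ _ => HQ.
refine (@Phi_ind r Z (fun g => g = w -> _) _ _ _ _ _ HQ erefl).
- move=> a b ? ? ? E; have [-> H] := ubPhi1 (ltn0Sn k) Hi Hj nij ltac:(eassumption) ltac:(eassumption) ltac:(eassumption) E.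
  exact: NPhi_adj.
- move=> a ? ? E; have [-> H] := ubPhi2 (ltn0Sn k) Hi Hj nij ltac:(eassumption) ltac:(eassumption) E.
  exact: NPhi_fork.
- move=> a b ? ? ? E; by have := ubPhi3 (ltn0Sn k) Hi Hj nij ltac:(eassumption) ltac:(eassumption) ltac:(eassumption) E.
- move=> b ? ? HZ E; have [-> [Eb H]] := ubPhi4 (ltn0Sn k) Hi Hj nij ltac:(eassumption) ltac:(eassumption) E.
  subst b; exact: NPhi_Z.
Qed.

End SC.


Section SE.
Variable r : nat.
Hypothesis hr : (3 <= r)%N.
Lemma Qvec_eq k i j (g : vec r) : (forall t, (1 <= t <= r)%N -> k%:Z * ((t == i) : nat)%:Z + ((t == j) : nat)%:Z = vat g t) ->
  vadd (vscale k%:Z (alpha r i)) (alpha r j) = g.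
Proof. move=> H; apply: vec_ext => t Ht; rewrite vatQ //; exact: H. Qed.

Lemma lbPhi (Z : {set 'I_r}) i j : (1 <= i <= r)%N -> (1 <= j <= r)%N -> i != j ->
  NPhi Z i j = 0%N \/ Q (Phi Z) i j (NPhi Z i j).
Proof.
move=> Hi Hj /eqP nij; rewrite /Q.
rewrite /NPhi.
case: ifP => [c1|n1].
  right; rewrite (@Qvec_eq 1 i j (eta r i j)); first by apply: Phi1; lia.
  by move=> t Ht; rewrite vat_eta_in //; lia.
case: ifP => [c2|n2].
  clear n1; right; rewrite (@Qvec_eq 1 i j (eta r j i)); first by apply: Phi1; lia.
  by move=> t Ht; rewrite vat_eta_in //; lia.
case: ifP => [c3|n3].
  clear n1 n2; right; rewrite (@Qvec_eq 1 i j (vadd (eta r (r-2) (r - 2)) (alpha r r))); first by apply: Phi2; lia.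
  by move=> t Ht; rewrite vat_Phi2 //; lia.
case: ifP => [c5|n5].
  clear n1 n2 n3; right; rewrite (@Qvec_eq 1 i j (vadd (eta r (r-1) r) (eta r (r-1) (r - 2)))).
    by apply: Phi4; [lia|lia|move: c5 => /andP[]].
  by move=> t Ht; rewrite vat_eta2 //; lia.
by left.
Qed.

Lemma cartanPhi (Z : {set 'I_r}) i j : (1 <= i <= r)%N -> (1 <= j <= r)%N -> i != j ->
  cartan (Phi Z) i j = - (NPhi Z i j)%:Z.
Proof.
move=> Hi Hj nij; apply: cartan_val => //; first by move=> k; exact: ubPhi.
exact: lbPhi.
Qed.
End SE.


Section SF.
Variable r : nat.
Hypothesis hr : (3 <= r)%N.

Definition NPsi (Y : {set 'I_r}) i j : nat :=
 (if j == i.+1 then (if (i == r-1) && inS Y (r-1) then 2 else 1) else if i == j.+1 then 1 else 0)%N.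

Lemma ubPsi1 k i j a b : (0 < k)%N -> (1 <= i <= r)%N -> (1 <= j <= r)%N -> i != j ->
  (1 <= a)%N -> (a <= b)%N -> (b <= r)%N ->
  eta r a b = vadd (vscale k%:Z (alpha r i)) (alpha r j) ->
  (k = 1 /\ (j = i.+1 \/ i = j.+1))%N.
Proof.
move=> k0 Hi Hj nij Ha Hab Hb E; have [Fi Fj F0] := F0' Hi Hj nij E.
rewrite !vat_eta_in // in Fi Fj.
have [t1 [Ht1 Et1]] : exists t, (1 <= t <= r)%N /\ (t = (minn i j).+1).
  exists (minn i j).+1; split => //; move/eqP: nij; lia.
have := F0 t1 Ht1; rewrite vat_eta_in //.
move/eqP: nij => nij. clear E F0. lia.
Qed.

Lemma ubPsi2 k i j a b : (0 < k)%N -> (1 <= i <= r)%N -> (1 <= j <= r)%N -> i != j ->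
  (1 <= a)%N -> (a < b)%N -> (b < r)%N ->
  vadd (eta r a r) (eta r b (r - 1)) = vadd (vscale k%:Z (alpha r i)) (alpha r j) -> False.
Proof.
move=> k0 Hi Hj nij Ha Hab Hb E; have [Fi Fj F0] := F0' Hi Hj nij E.
rewrite !vat_eta2 // in Fi Fj.
have H1 := F0 r ltac:(lia); have H2 := F0 a ltac:(lia); have H3 := F0 (r-1)%N ltac:(lia).
rewrite vat_eta2 in H1; [|lia]; rewrite vat_eta2 in H2; [|lia]; rewrite vat_eta2 in H3; [|lia].
move/eqP: nij => nij. clear E F0.
case: H1 => [H1|[H1|H1]]; [exfalso; lia| |]; case: H3 => [H3|[H3|H3]]; [exfalso;lia| | | exfalso;lia| |]; lia.
Qed.

Lemma ubPsi3 k i j b : (0 < k)%N -> (1 <= i <= r)%N -> (1 <= j <= r)%N -> i != j ->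
  (1 <= b)%N -> (b < r)%N ->
  vadd (eta r b r) (eta r b (r - 1)) = vadd (vscale k%:Z (alpha r i)) (alpha r j) ->
  (k = 2 /\ b = r - 1 /\ i = r-1 /\ j = r)%N.
Proof.
move=> k0 Hi Hj nij Ha Hb E; have [Fi Fj F0] := F0' Hi Hj nij E.
rewrite !vat_eta2 // in Fi Fj.
have H1 := F0 r ltac:(lia); have H2 := F0 b ltac:(lia); have H3 := F0 (r-1)%N ltac:(lia).
rewrite vat_eta2 in H1; [|lia]; rewrite vat_eta2 in H2; [|lia]; rewrite vat_eta2 in H3; [|lia].
move/eqP: nij => nij. clear E F0.
case: H1 => [H1|[H1|H1]]; [exfalso; lia| |]; case: H3 => [H3|[H3|H3]]; [exfalso;lia| | | exfalso;lia| |]; lia.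
Qed.

Lemma ubPsi (Y : {set 'I_r}) k i j : (1 <= i <= r)%N -> (1 <= j <= r)%N -> i != j ->
  Q (Psi Y) i j k -> (k <= NPsi Y i j)%N.
Proof.
move=> Hi Hj nij; case: k => [//|k]; rewrite /Q.
set w := vadd _ _ => HQ.
refine (@Psi_ind r Y (fun g => g = w -> _) _ _ _ _ HQ erefl).
- move=> a b ? ? ? E; have [-> H] := ubPsi1 (ltn0Sn k) Hi Hj nij ltac:(eassumption) ltac:(eassumption) ltac:(eassumption) E.
  rewrite /NPsi; case: H => ->; rewrite ?eqxx //; case: ifP => //.
  by move=> _; case: ifP.
- move=> a b ? ? ? E; by have := ubPsi2 (ltn0Sn k) Hi Hj nij ltac:(eassumption) ltac:(eassumption) ltac:(eassumption) E.
- move=> b ? ? HY E; have [-> [Eb [-> ->]]] := ubPsi3 (ltn0Sn k) Hi Hj nij ltac:(eassumption) ltac:(eassumption) E.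
  subst b; rewrite /NPsi.
  have -> : (r == (r-1).+1)%N = true by apply/eqP; lia.
  by rewrite eqxx HY.
Qed.

Lemma lbPsi (Y : {set 'I_r}) i j : (1 <= i <= r)%N -> (1 <= j <= r)%N -> i != j ->
  NPsi Y i j = 0%N \/ Q (Psi Y) i j (NPsi Y i j).
Proof.
move=> Hi Hj /eqP nij; rewrite /Q /NPsi.
case: ifP => [/eqP c1|n1].
  case: ifP => [/andP[/eqP c2 HY]|n2].
    right; rewrite (@Qvec_eq r 2 i j (vadd (eta r (r-1) r) (eta r (r-1) (r - 1)))).
      by apply: Psi3 => //; lia.
    by move=> t Ht; rewrite vat_eta2 //; lia.
  clear n2; right; rewrite (@Qvec_eq r 1 i j (eta r i j)); first by apply: Psi1; lia.
  by move=> t Ht; rewrite vat_eta_in //; lia.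
case: ifP => [/eqP c2|n2].
  clear n1; right; rewrite (@Qvec_eq r 1 i j (eta r j i)); first by apply: Psi1; lia.
  by move=> t Ht; rewrite vat_eta_in //; lia.
by left.
Qed.

Lemma cartanPsi (Y : {set 'I_r}) i j : (1 <= i <= r)%N -> (1 <= j <= r)%N -> i != j ->
  cartan (Psi Y) i j = - (NPsi Y i j)%:Z.
Proof.
move=> Hi Hj nij; apply: cartan_val => //; first by move=> k; exact: ubPsi.
exact: lbPsi.
Qed.
End SF.



Section SG.
Variable r : nat.
Hypothesis hr : (3 <= r)%N.

Lemma sum_vat (v : vec r) t : \sum_(m : 'I_r) ((m.+1 == t) : nat)%:Z * v m = vat v t.
Proof.
rewrite /vat; case: t => [|t] /=.
  rewrite big1 => [|m _]; last by rewrite mul0r.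
  by case: insubP.
case: insubP => [l lt E|nlt] /=.
  rewrite (bigD1 l) //= E eqxx mul1r big1 ?addr0 // => m nml.
  case: eqP => [[Em]|]; last by rewrite mul0r.
  by case/eqP: nml; apply: val_inj; rewrite /= Em E.
rewrite big1 // => m _; case: eqP => [[Em]|]; last by rewrite mul0r.
by move: nlt; rewrite -Em ltn_ord.
Qed.

Lemma sum_row (c : nat -> int) (cs : seq (int * nat)) (v : vec r) :
  (forall j, (1 <= j <= r)%N -> c j = \sum_(p <- cs) p.1 * ((j == p.2) : nat)%:Z) ->
  \sum_(m : 'I_r) c m.+1 * v m = \sum_(p <- cs) p.1 * vat v p.2.
Proof.
move=> H.
rewrite (eq_bigr (fun m : 'I_r => \sum_(p <- cs) p.1 * ((m.+1 == p.2) : nat)%:Z * v m)); last first.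
  by move=> m _; rewrite H ?mulr_suml //; apply/andP; split => //; exact: ltn_ord.
rewrite exchange_big; apply: eq_bigr => p _.
by rewrite -sum_vat mulr_sumr; apply: eq_bigr => m _; rewrite mulrA.
Qed.

Definition refl i (f : int) (v : vec r) : vec r := [ffun l => v l - f * alpha r i l].

Lemma vat_refl i f v t : vat (refl i f v) t = vat v t - f * vat (alpha r i) t.
Proof. rewrite /vat; case: insubP => //= *; rewrite ?mulr0 ?subr0 //; case: eqP => //=; rewrite ?ffunE ?mulr0 ?subr0 //. Qed.

Lemma sigma_row (L : seq (vec r)) i (cs : seq (int * nat)) (v : vec r) :
  (forall j, (1 <= j <= r)%N -> cartan L i j = \sum_(p <- cs) p.1 * ((j == p.2) : nat)%:Z) ->
  sigma L i v = refl i (\sum_(p <- cs) p.1 * vat v p.2) v.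
Proof. by move=> H; rewrite /sigma /refl (sum_row _ H). Qed.

Lemma cartan_diag (L : seq (vec r)) i : cartan L i i = 2.
Proof. by rewrite /cartan eqxx. Qed.

Lemma rowPhi_low (Z : {set 'I_r}) i v : (1 <= i <= r - 2)%N ->
  sigma (Phi Z) i v = refl i (2 * vat v i - vat v i.+1 - ((2 <= i)%N : nat)%:Z * vat v i.-1
                           - ((i == r - 2)%N : nat)%:Z * vat v r) v.
Proof.
move=> Hi; rewrite (@sigma_row _ _ [:: (2, i); (-1, i.+1); (- ((2 <= i)%N : nat)%:Z, i.-1);
   (- ((i == r - 2)%N : nat)%:Z, r)]).
  rewrite !big_cons big_nil /=; congr refl; ring.
move=> j Hj; rewrite !big_cons big_nil /=.
case: (eqVneq j i) => [->|nji]; first by rewrite cartan_diag; dpll.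
have Hc := @cartanPhi r hr Z i j ltac:(lia) Hj ltac:(by rewrite eq_sym).
rewrite Hc /NPhi; move/eqP: nji => nji; dpll.
Qed.

Lemma rowPhi_r1 (Z : {set 'I_r}) v :
  sigma (Phi Z) (r-1) v = refl (r-1) (2 * vat v (r-1) - vat v (r-2) - (inS Z (r-1) : nat)%:Z * vat v r) v.
Proof.
rewrite (@sigma_row _ _ [:: (2, (r-1)%N); (-1, (r-2)%N); (- (inS Z (r-1) : nat)%:Z, r)]).
  rewrite !big_cons big_nil /=; congr refl; ring.
move=> j Hj; rewrite !big_cons big_nil /=.
case: (eqVneq j (r-1)%N) => [->|nji]; first by rewrite cartan_diag; dpll.
have Hc := @cartanPhi r hr Z (r-1) j ltac:(lia) Hj ltac:(by rewrite eq_sym).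
rewrite Hc /NPhi; move/eqP: nji => nji; dpll.
Qed.

Lemma rowPsi_low (Y : {set 'I_r}) i v : (1 <= i <= r - 2)%N ->
  sigma (Psi Y) i v = refl i (2 * vat v i - vat v i.+1 - ((2 <= i)%N : nat)%:Z * vat v i.-1) v.
Proof.
move=> Hi; rewrite (@sigma_row _ _ [:: (2, i); (-1, i.+1); (- ((2 <= i)%N : nat)%:Z, i.-1)]).
  rewrite !big_cons big_nil /=; congr refl; ring.
move=> j Hj; rewrite !big_cons big_nil /=.
case: (eqVneq j i) => [->|nji]; first by rewrite cartan_diag; dpll.
have Hc := @cartanPsi r hr Y i j ltac:(lia) Hj ltac:(by rewrite eq_sym).
rewrite Hc /NPsi; move/eqP: nji => nji; dpll.
Qed.

Lemma rowPsi_r1 (Y : {set 'I_r}) v :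
  sigma (Psi Y) (r-1) v = refl (r-1) (2 * vat v (r-1) - vat v (r-2) - (1 + (inS Y (r-1) : nat)%:Z) * vat v r) v.
Proof.
rewrite (@sigma_row _ _ [:: (2, (r-1)%N); (-1, (r-2)%N); (- (1 + (inS Y (r-1) : nat)%:Z), r)]).
  rewrite !big_cons big_nil /=; congr refl; ring.
move=> j Hj; rewrite !big_cons big_nil /=.
case: (eqVneq j (r-1)%N) => [->|nji]; first by rewrite cartan_diag; dpll.
have Hc := @cartanPsi r hr Y (r-1) j ltac:(lia) Hj ltac:(by rewrite eq_sym).
rewrite Hc /NPsi; move/eqP: nji => nji; dpll.
Qed.

Lemma rowPsi_r (Y : {set 'I_r}) v :
  sigma (Psi Y) r v = refl r (2 * vat v r - vat v (r-1)) v.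
Proof.
rewrite (@sigma_row _ _ [:: (2, r); (-1, (r-1)%N)]).
  rewrite !big_cons big_nil /=; congr refl; ring.
move=> j Hj; rewrite !big_cons big_nil /=.
case: (eqVneq j r) => [->|nji]; first by rewrite cartan_diag; dpll.
have Hc := @cartanPsi r hr Y r j ltac:(lia) Hj ltac:(by rewrite eq_sym).
rewrite Hc /NPsi; move/eqP: nji => nji; dpll.
Qed.
End SG.


Section SH.
Variable r : nat.
Hypothesis hr : (3 <= r)%N.

Definition F (L : seq (vec r)) i (v : vec r) := \sum_(m : 'I_r) cartan L i m.+1 * v m.

Lemma sigmaF (L : seq (vec r)) i v : sigma L i v = refl i (F L i v) v.
Proof. by []. Qed.

Lemma F_opp (L : seq (vec r)) i (v : vec r) : F L i (vopp v) = - F L i v.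
Proof. by rewrite /F -sumrN; apply: eq_bigr => m _; rewrite ffunE mulrN. Qed.

Lemma sigma_opp (L : seq (vec r)) i (v : vec r) : sigma L i (vopp v) = vopp (sigma L i v).
Proof. by apply/ffunP => l; rewrite !sigmaF !ffunE F_opp; ring. Qed.

Lemma F_alpha (L : seq (vec r)) i : (1 <= i <= r)%N -> F L i (alpha r i) = 2.
Proof.
move=> Hi; rewrite /F (eq_bigr (fun m : 'I_r => ((m.+1 == i) : nat)%:Z * cartan L i m.+1)).
  rewrite (eq_bigr (fun m : 'I_r => ((m.+1 == i) : nat)%:Z * [ffun l : 'I_r => cartan L i l.+1] m)).
    by rewrite sum_vat (@vat_ffun r (fun t => cartan L i t)) Hi cartan_diag.
  by move=> m _; rewrite ffunE.
move=> m _; rewrite ffunE mulrC; case: eqP => [->|] //=; by rewrite ?cartan_diag ?mulr0 ?mul0r.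
Qed.

Lemma F_refl (L : seq (vec r)) i c (v : vec r) : (1 <= i <= r)%N -> F L i (refl i c v) = F L i v - c * 2.
Proof.
move=> Hi; rewrite -(F_alpha L Hi) /F mulr_sumr -sumrB; apply: eq_bigr => m _.
by rewrite ffunE; ring.
Qed.

Lemma sigma_inv (L : seq (vec r)) i (v : vec r) : (1 <= i <= r)%N -> sigma L i (sigma L i v) = v.
Proof.
move=> Hi; rewrite !sigmaF F_refl //; apply/ffunP => l; rewrite !ffunE; ring.
Qed.

Lemma pm_opp (L : seq (vec r)) v : v \in pm L -> vopp v \in pm L.
Proof. by move=> H; elim/pm_ind: H => w Hw; [apply: pm_r | rewrite vopp_inv; apply: pm_l]. Qed.

Lemma fwd_pm (L L' : seq (vec r)) i : (forall v, v \in L -> sigma L i v \in pm L') -> forall v, v \in pm L -> sigma L i v \in pm L'.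
Proof. move=> H v; elim/pm_ind => w Hw; [exact: H | rewrite sigma_opp; exact/pm_opp/H]. Qed.

Lemma eq_from_fwd (L L' : seq (vec r)) i : (1 <= i <= r)%N -> (forall v, sigma L i v = sigma L' i v) ->
  (forall v, v \in L -> sigma L i v \in pm L') -> (forall v, v \in L' -> sigma L' i v \in pm L) ->
  sigmaPM L i =i pm L'.
Proof.
move=> Hi Hs H1 H2 x; apply/idP/idP.
  by case/mapP => v Hv ->; apply: fwd_pm H1 v Hv.
move=> Hx; apply/mapP; exists (sigma L' i x); first exact: fwd_pm H2 x Hx.
by rewrite -Hs sigma_inv.
Qed.

Lemma vat_out (v : vec r) t : ~~ ((1 <= t) && (t <= r))%N -> vat v t = 0.
Proof.
rewrite /vat; case: t => [|t] /=; first by case: insubP.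
case: insubP => //= l lt E; by rewrite -E ltn_ord.
Qed.

Lemma vat_xch (v : vec r) t : vat (xch v) t = vat v (swapn (r-1) t).
Proof.
rewrite /xch (@vat_ffun r (fun t => vat v (swapn (r - 1) t))).
case: ifP => // /negbT H; rewrite vat_out //.
move: H; rewrite /swapn; dpll.
Qed.

Lemma swapnK i t : swapn i (swapn i t) = t.
Proof. rewrite /swapn; dpll. Qed.

Lemma xch_inv (v : vec r) : xch (xch v) = v.
Proof. by apply: vec_ext => t Ht; rewrite !vat_xch swapnK. Qed.

Lemma xch_opp (v : vec r) : xch (vopp v) = vopp (xch v).
Proof. by apply: vec_ext => t Ht; rewrite !(vat_xch, vatE_opp). Qed.

Lemma mem_xch (L : seq (vec r)) v : (v \in map (@xch r) L) = (xch v \in L).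
Proof.
apply/mapP/idP => [[w Hw ->]|H]; first by rewrite xch_inv.
by exists (xch v); rewrite ?xch_inv.
Qed.

Lemma cartan_xch (L : seq (vec r)) i j : (1 <= i <= r)%N -> (1 <= j <= r)%N ->
  cartan (map (@xch r) L) i j = cartan L (swapn (r-1) i) (swapn (r-1) j).
Proof.
move=> Hi Hj; case: (eqVneq i j) => [->|nij]; first by rewrite !cartan_diag.
apply: cartan_eqQ => //.
- by apply/eqP => /(congr1 (swapn (r-1))); rewrite !swapnK; apply/eqP.
- rewrite /swapn; dpll.
move=> k; rewrite /Q mem_xch; congr (_ \in L).
apply: vec_ext => t Ht; rewrite vat_xch !vatE; rewrite /swapn; dpll.
Qed.
End SH.


Section SI.
Variable r : nat.
Hypothesis hr : (3 <= r)%N.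

Lemma vat_ord (v : vec r) (m : 'I_r) : vat v m.+1 = v m.
Proof.
rewrite /vat /=; case: insubP => [l _ E|]; last by rewrite ltn_ord.
by congr (v _); apply: val_inj.
Qed.

Lemma F_xch (L : seq (vec r)) i (v : vec r) : (1 <= i <= r)%N ->
  F (map (@xch r) L) i (xch v) = F L (swapn (r-1) i) v.
Proof.
move=> Hi; rewrite /F.
have Hp : forall m : 'I_r, ((swapn (r-1) m.+1).-1 < r)%N.
  by move=> m; have := ltn_ord m; rewrite /swapn; dpll.
pose p := fun m : 'I_r => Ordinal (Hp m).
have pS : forall m, (p m).+1 = swapn (r-1) m.+1.
  by move=> m; rewrite /p /= /swapn; dpll.
have pinj : injective p.
  move=> m1 m2 /(congr1 (fun x : 'I_r => (val x).+1)); rewrite /= !pS.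
  by move/(congr1 (swapn (r-1))); rewrite !(swapnK hr) => [[]] E; apply: val_inj.
rewrite [RHS](reindex_inj pinj) /=; apply: eq_bigr => m _.
rewrite cartan_xch //; last by rewrite ltn_ord.
rewrite -!vat_ord pS /xch.
by rewrite (@vat_ffun r (fun t => vat v (swapn (r - 1) t))) /= ltn_ord.
Qed.

Lemma sigma_xch (L : seq (vec r)) i (v : vec r) : (1 <= i <= r)%N ->
  sigma (map (@xch r) L) i (xch v) = xch (sigma L (swapn (r-1) i) v).
Proof.
move=> Hi; rewrite !sigmaF F_xch //; apply: vec_ext => t Ht.
rewrite (vat_xch hr) !vat_refl (vat_xch hr); congr (_ - _ * _).
rewrite !vatE /swapn; dpll.
Qed.

Lemma pm_xch (L : seq (vec r)) : pm (map (@xch r) L) = map (@xch r) (pm L).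
Proof.
rewrite /pm map_cat -!map_comp; congr (_ ++ _); apply: eq_map => v /=; by rewrite xch_opp.
Qed.

Lemma sigmaPM_xch (L : seq (vec r)) i : (1 <= i <= r)%N ->
  sigmaPM (map (@xch r) L) i = map (@xch r) (sigmaPM L (swapn (r-1) i)).
Proof.
move=> Hi; rewrite /sigmaPM pm_xch -!map_comp; apply: eq_map => v /=; exact: sigma_xch.
Qed.

Lemma sigma_eqL (L1 L2 : seq (vec r)) i : L1 =i L2 -> (1 <= i <= r)%N -> sigma L1 i =1 sigma L2 i.
Proof.
move=> E Hi v; rewrite !sigmaF; suff -> : F L1 i v = F L2 i v by [].
rewrite /F; apply: eq_bigr => m _; congr (_ * _).
case: (eqVneq i m.+1) => [->|nim]; first by rewrite !cartan_diag.
by apply: cartan_eqQ => // k; rewrite /Q E.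
Qed.

Lemma pm_eqL (L1 L2 : seq (vec r)) : L1 =i L2 -> pm L1 =i pm L2.
Proof. by move=> E x; rewrite /pm !mem_cat E (eq_mem_map _ E). Qed.

Lemma sigmaPM_eqL (L1 L2 : seq (vec r)) i : L1 =i L2 -> (1 <= i <= r)%N -> sigmaPM L1 i =i sigmaPM L2 i.
Proof.
move=> E Hi x; rewrite /sigmaPM (eq_map (sigma_eqL E Hi)); exact: eq_mem_map (pm_eqL E) x.
Qed.
End SI.


Section SJ.
Variable r : nat.
Hypothesis hr : (3 <= r)%N.

Lemma swK i t : swapn i (swapn i t) = t.
Proof. clear hr; rewrite /swapn; dpll. Qed.

Lemma in_pm_pos (L : seq (vec r)) (w g : vec r) : g \in L ->
  (forall t, (1 <= t <= r)%N -> vat w t = vat g t) -> w \in pm L.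
Proof. by move=> Hg H; rewrite (vec_ext H); apply: pm_l. Qed.
Lemma in_pm_neg (L : seq (vec r)) (w g : vec r) : g \in L ->
  (forall t, (1 <= t <= r)%N -> vat w t = - vat g t) -> w \in pm L.
Proof.
move=> Hg H; have -> : w = vopp g by apply: vec_ext => t Ht; rewrite H // vatE_opp.
exact: pm_r.
Qed.

Lemma inS_tsp (Z : {set 'I_r}) i t : (i.+1 < r)%N -> (t < r)%N -> inS (tsp i Z) t = inS Z (swapn i t).
Proof.
move=> Hi Ht; rewrite /inS; apply/existsP/existsP.
  case=> x /andP[]; rewrite inE => /existsP[y /andP[Hy /eqP Ey]] /eqP Ex.
  exists y; rewrite Hy /= -Ex -Ey swK eqxx //.
case=> y /andP[Hy /eqP Ey]; exists (Ordinal Ht); rewrite inE /= eqxx andbT.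
apply/existsP; exists y; rewrite Hy Ey swK eqxx //.
Qed.

Lemma inS_setDel (Z : {set 'I_r}) k t : inS (setDel Z k) t = inS Z t && (t != k).
Proof.
rewrite /inS; apply/existsP/andP.
  case=> x /andP[]; rewrite inE => /andP[Hx Hk] /eqP Ex; subst t; split => //.
  by apply/existsP; exists x; rewrite Hx eqxx.
case=> /existsP[x /andP[Hx /eqP Ex]] Hk; exists x; subst t.
by rewrite inE Hx Hk eqxx.
Qed.

Lemma inS_setAdd (Z : {set 'I_r}) k t : (t < r)%N -> inS (setAdd Z k) t = inS Z t || (t == k).
Proof.
move=> Ht; rewrite /inS; apply/existsP/orP.
  case=> x /andP[]; rewrite inE => /orP[Hx|/eqP Hk] /eqP Ex; subst t.
    by left; apply/existsP; exists x; rewrite Hx eqxx.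
  by right; apply/eqP.
case=> [/existsP[x /andP[Hx /eqP Ex]]|/eqP Hk].
  by exists x; rewrite inE Hx Ex eqxx.
by exists (Ordinal Ht); rewrite inE /= eqxx andbT; apply/orP; right; apply/eqP.
Qed.

Definition fPL i (v : vec r) := 2 * vat v i - vat v i.+1 - ((2 <= i)%N : nat)%:Z * vat v i.-1
                           - ((i == r - 2)%N : nat)%:Z * vat v r.
Definition fP1 (Z : {set 'I_r}) (v : vec r) := 2 * vat v (r-1) - vat v (r-2) - (inS Z (r-1) : nat)%:Z * vat v r.
Definition fSL i (v : vec r) := 2 * vat v i - vat v i.+1 - ((2 <= i)%N : nat)%:Z * vat v i.-1.
Definition fS1 (Y : {set 'I_r}) (v : vec r) := 2 * vat v (r-1) - vat v (r-2) - (1 + (inS Y (r-1) : nat)%:Z) * vat v r.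
Definition fSr (v : vec r) := 2 * vat v r - vat v (r-1).

Lemma rPL (Z : {set 'I_r}) i v : (1 <= i <= r - 2)%N -> sigma (Phi Z) i v = refl i (fPL i v) v.
Proof. exact: rowPhi_low. Qed.
Lemma rP1 (Z : {set 'I_r}) v : sigma (Phi Z) (r-1) v = refl (r-1) (fP1 Z v) v.
Proof. exact: rowPhi_r1. Qed.
Lemma rSL (Y : {set 'I_r}) i v : (1 <= i <= r - 2)%N -> sigma (Psi Y) i v = refl i (fSL i v) v.
Proof. exact: rowPsi_low. Qed.
Lemma rS1 (Y : {set 'I_r}) v : sigma (Psi Y) (r-1) v = refl (r-1) (fS1 Y v) v.
Proof. exact: rowPsi_r1. Qed.
Lemma rSr (Y : {set 'I_r}) v : sigma (Psi Y) r v = refl r (fSr v) v.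
Proof. exact: rowPsi_r. Qed.

Ltac vsolve := move=> t Ht; rewrite ?vat_refl !vatE; dpll.
Ltac fval c := match goal with |- context [refl ?i ?f ?g] =>
  rewrite (_ : f = (c : int)); [| rewrite /fPL /fP1 /fSL /fS1 /fSr !vatE; dpll] end.
Ltac pos T := apply: (@in_pm_pos _ _ T); [| vsolve].
Ltac neg T := apply: (@in_pm_neg _ _ T); [| vsolve].

Lemma fwdA (Z : {set 'I_r}) i : (1 <= i <= r - 2)%N ->
  forall v, v \in Phi Z -> sigma (Phi Z) i v \in pm (Phi (tsp i Z)).
Proof.
move=> Hi v; elim/Phi_ind => [a b Ha Hab Hb|a Ha Hb|a b Ha Hab Hb|b Ha Hb HZ]; rewrite rPL //.
- case: (ltngtP a i) => Hai.
  + case: (ltngtP b.+1 i) => Hbi.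
    * fval (0 : int); pos (eta r a b); apply: Phi1; lia.
    * case: (eqVneq b i) => Hb2.
      - subst b; fval (1 : int); pos (eta r a i.-1); apply: Phi1; lia.
      - fval (0 : int); pos (eta r a b); apply: Phi1; lia.
    * fval ((-1) : int); pos (eta r a i); apply: Phi1; lia.
  + case: (eqVneq a i.+1) => Ha2.
    * fval ((-1) : int); pos (eta r i b); apply: Phi1; lia.
    * fval (0 : int); pos (eta r a b); apply: Phi1; lia.
  + subst a; case: (eqVneq b i) => Hb2.
    * subst b; fval (2 : int); neg (eta r i i); apply: Phi1; lia.
    * fval (1 : int); pos (eta r i.+1 b); apply: Phi1; lia.
- case: (eqVneq a i) => Ha2.
  + subst a; fval (1 : int); pos (vadd (eta r i.+1 (r-2)) (alpha r r)); apply: Phi2; lia.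
  + case: (eqVneq a i.+1) => Ha3.
    * subst a; fval ((-1) : int); pos (vadd (eta r i (r-2)) (alpha r r)); apply: Phi2; lia.
    * fval (0 : int); pos (vadd (eta r a (r-2)) (alpha r r)); apply: Phi2; lia.
- case: (boolP ((a == i) && (b == i.+1))) => [/andP[/eqP Ea /eqP Eb]|Hn].
    subst a b; fval (0 : int); pos (vadd (eta r i r) (eta r i.+1 (r-2))); apply: Phi3; lia.
  case: (eqVneq a i) => Ha2.
    subst a; fval (1 : int); pos (vadd (eta r i.+1 r) (eta r b (r-2))); apply: Phi3; lia.
  case: (eqVneq a i.+1) => Ha3.
    subst a; fval ((-1) : int); pos (vadd (eta r i r) (eta r b (r-2))); apply: Phi3; lia.
  case: (eqVneq b i) => Hb2.
    subst b; fval (1 : int); pos (vadd (eta r a r) (eta r i.+1 (r-2))); apply: Phi3; lia.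
  case: (eqVneq b i.+1) => Hb3.
    subst b; fval ((-1) : int); pos (vadd (eta r a r) (eta r i (r-2))); apply: Phi3; lia.
  fval (0 : int); pos (vadd (eta r a r) (eta r b (r-2))); apply: Phi3; lia.
- case: (eqVneq b i) => Hb2.
    subst b; fval (2 : int); pos (vadd (eta r i.+1 r) (eta r i.+1 (r-2))); apply: Phi4; try lia.
    by rewrite inS_tsp; try lia; rewrite /swapn eqn_leq ltnn /= eqxx.
  case: (eqVneq b i.+1) => Hb3.
    subst b; fval ((-2) : int); pos (vadd (eta r i r) (eta r i (r-2))); apply: Phi4; try lia.
    by rewrite inS_tsp; try lia; rewrite /swapn eqxx.
  fval (0 : int); pos (vadd (eta r b r) (eta r b (r-2))); apply: Phi4; try lia.
  by rewrite inS_tsp; try lia; rewrite /swapn (negbTE Hb2) (negbTE Hb3).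
Qed.
End SJ.


Section SL1.
Variable r : nat.
Hypothesis hr : (3 <= r)%N.


Ltac vsolve := move=> t Ht; rewrite ?vat_refl !vatE; dpll.
Ltac fval c := match goal with |- context [refl ?i ?f ?g] =>
  rewrite (_ : f = (c : int)); [| rewrite /fPL /fP1 /fSL /fS1 /fSr !vatE; dpll] end.
Ltac pos T := apply: (@in_pm_pos r _ _ T); [| vsolve].
Ltac neg T := apply: (@in_pm_neg r _ _ T); [| vsolve].


Lemma fwdB (Y : {set 'I_r}) i : (1 <= i <= r - 2)%N ->
  forall v, v \in Psi Y -> sigma (Psi Y) i v \in pm (Psi (tsp i Y)).
Proof.
move=> Hi v; elim/Psi_ind => [a b Ha Hab Hb|a b Ha Hab Hb|b Ha Hb HY]; rewrite rSL //.
- case: (ltngtP a i) => Hai.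
  + case: (ltngtP b.+1 i) => Hbi.
    * fval (0 : int); pos (eta r a b); apply: Psi1; lia.
    * case: (eqVneq b i) => Hb2.
      - subst b; fval (1 : int); pos (eta r a i.-1); apply: Psi1; lia.
      - fval (0 : int); pos (eta r a b); apply: Psi1; lia.
    * fval ((-1) : int); pos (eta r a i); apply: Psi1; lia.
  + case: (eqVneq a i.+1) => Ha2.
    * fval ((-1) : int); pos (eta r i b); apply: Psi1; lia.
    * fval (0 : int); pos (eta r a b); apply: Psi1; lia.
  + subst a; case: (eqVneq b i) => Hb2.
    * subst b; fval (2 : int); neg (eta r i i); apply: Psi1; lia.
    * fval (1 : int); pos (eta r i.+1 b); apply: Psi1; lia.
- case: (boolP ((a == i) && (b == i.+1))) => [/andP[/eqP Ea /eqP Eb]|Hn].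
    subst a b; fval (0 : int); pos (vadd (eta r i r) (eta r i.+1 (r-1))); apply: Psi2; lia.
  case: (eqVneq a i) => Ha2.
    subst a; fval (1 : int); pos (vadd (eta r i.+1 r) (eta r b (r-1))); apply: Psi2; lia.
  case: (eqVneq a i.+1) => Ha3.
    subst a; fval ((-1) : int); pos (vadd (eta r i r) (eta r b (r-1))); apply: Psi2; lia.
  case: (eqVneq b i) => Hb2.
    subst b; fval (1 : int); pos (vadd (eta r a r) (eta r i.+1 (r-1))); apply: Psi2; lia.
  case: (eqVneq b i.+1) => Hb3.
    subst b; fval ((-1) : int); pos (vadd (eta r a r) (eta r i (r-1))); apply: Psi2; lia.
  fval (0 : int); pos (vadd (eta r a r) (eta r b (r-1))); apply: Psi2; lia.
- case: (eqVneq b i) => Hb2.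
    subst b; fval (2 : int); pos (vadd (eta r i.+1 r) (eta r i.+1 (r-1))); apply: Psi3; try lia.
    by rewrite inS_tsp; try lia; rewrite /swapn eqn_leq ltnn /= eqxx.
  case: (eqVneq b i.+1) => Hb3.
    subst b; fval ((-2) : int); pos (vadd (eta r i r) (eta r i (r-1))); apply: Psi3; try lia.
    by rewrite inS_tsp; try lia; rewrite /swapn eqxx.
  fval (0 : int); pos (vadd (eta r b r) (eta r b (r-1))); apply: Psi3; try lia.
  by rewrite inS_tsp; try lia; rewrite /swapn (negbTE Hb2) (negbTE Hb3).
Qed.
End SL1.


Section SL2.
Variable r : nat.
Hypothesis hr : (3 <= r)%N.


Ltac vsolve := move=> t Ht; rewrite ?vat_refl !vatE; dpll.
Ltac fval c := match goal with |- context [refl ?i ?f ?g] =>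
  rewrite (_ : f = (c : int)); [| rewrite /fPL /fP1 /fSL /fS1 /fSr !vatE; dpll] end.
Ltac pos T := apply: (@in_pm_pos r _ _ T); [| vsolve].
Ltac neg T := apply: (@in_pm_neg r _ _ T); [| vsolve].



Lemma fwdC (Z : {set 'I_r}) : ~~ inS Z (r-1) ->
  forall v, v \in Phi Z -> sigma (Phi Z) (r-1) v \in pm (Phi Z).
Proof.
move=> Hn v; elim/Phi_ind => [a b Ha Hab Hb|a Ha Hb|a b Ha Hab Hb|b Ha Hb HZ]; rewrite (rP1 hr) /fP1 (negbTE Hn).
- case: (eqVneq b (r-1)%N) => Hb2.
    subst b; case: (eqVneq a (r-1)%N) => Ha2.
      subst a; fval (2 : int); neg (eta r (r-1) (r-1)); apply: Phi1; lia.
    fval (1 : int); pos (eta r a (r-2)); apply: Phi1; lia.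
  case: (eqVneq b (r-2)%N) => Hb3.
    subst b; fval ((-1) : int); pos (eta r a (r-1)); apply: Phi1; lia.
  fval (0 : int); pos (eta r a b); apply: Phi1; lia.
- case: (eqVneq a (r-1)%N) => Ha2.
    subst a; fval (0 : int); pos (vadd (eta r (r-1) (r-2)) (alpha r r)); apply: Phi2; lia.
  fval ((-1) : int); pos (vadd (eta r a r) (eta r (r-1) (r-2))); apply: Phi3; lia.
- case: (eqVneq b (r-1)%N) => Hb2.
    subst b; fval (1 : int); pos (vadd (eta r a (r-2)) (alpha r r)); apply: Phi2; lia.
  fval (0 : int); pos (vadd (eta r a r) (eta r b (r-2))); apply: Phi3; lia.
- have Hb2 : b != (r-1)%N by apply/eqP => E; subst b; rewrite HZ in Hn.
  fval (0 : int); pos (vadd (eta r b r) (eta r b (r-2))); apply: Phi4; try lia; exact: HZ.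
Qed.

Lemma fwdD (Z : {set 'I_r}) : inS Z (r-1) ->
  forall v, v \in Phi Z -> sigma (Phi Z) (r-1) v \in pm (Psi (setDel Z (r-1))).
Proof.
move=> HZ1 v; elim/Phi_ind => [a b Ha Hab Hb|a Ha Hb|a b Ha Hab Hb|b Ha Hb HZ]; rewrite (rP1 hr) /fP1 HZ1.
- case: (eqVneq b (r-1)%N) => Hb2.
    subst b; case: (eqVneq a (r-1)%N) => Ha2.
      subst a; fval (2 : int); neg (eta r (r-1) (r-1)); apply: Psi1; lia.
    fval (1 : int); pos (eta r a (r-2)); apply: Psi1; lia.
  case: (eqVneq b (r-2)%N) => Hb3.
    subst b; fval ((-1) : int); pos (eta r a (r-1)); apply: Psi1; lia.
  fval (0 : int); pos (eta r a b); apply: Psi1; lia.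
- case: (eqVneq a (r-1)%N) => Ha2.
    subst a; fval ((-1) : int); pos (eta r (r-1) r); apply: Psi1; lia.
  fval ((-2) : int); pos (vadd (eta r a r) (eta r (r-1) (r-1))); apply: Psi2; lia.
- case: (eqVneq b (r-1)%N) => Hb2.
    subst b; fval (0 : int); pos (eta r a r); apply: Psi1; lia.
  fval ((-1) : int); pos (vadd (eta r a r) (eta r b (r-1))); apply: Psi2; lia.
- case: (eqVneq b (r-1)%N) => Hb2.
    subst b; fval (1 : int); pos (eta r r r); apply: Psi1; lia.
  fval ((-1) : int); pos (vadd (eta r b r) (eta r b (r-1))); apply: Psi3; try lia.
  by rewrite inS_setDel HZ Hb2.
Qed.

Lemma fwdD' (Y : {set 'I_r}) : ~~ inS Y (r-1) ->
  forall v, v \in Psi Y -> sigma (Psi Y) (r-1) v \in pm (Phi (setAdd Y (r-1))).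
Proof.
move=> Hn v; elim/Psi_ind => [a b Ha Hab Hb|a b Ha Hab Hb|b Ha Hb HY]; rewrite (rS1 hr) /fS1 (negbTE Hn).
- case: (eqVneq b r) => Hbr.
    subst b; case: (eqVneq a r) => Har.
      subst a; fval ((-1) : int); pos (vadd (eta r (r-1) r) (eta r (r-1) (r-2))); apply: Phi4; try lia.
      by rewrite inS_setAdd ?eqxx ?orbT //; lia.
    case: (eqVneq a (r-1)%N) => Ha2.
      subst a; fval (1 : int); pos (vadd (eta r (r-1) (r-2)) (alpha r r)); apply: Phi2; lia.
    fval (0 : int); pos (vadd (eta r a r) (eta r (r-1) (r-2))); apply: Phi3; lia.
  have Hb' : (b < r)%N by lia.
  clear Hbr Hb.
    case: (eqVneq b (r-1)%N) => Hb2.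
      subst b; case: (eqVneq a (r-1)%N) => Ha2.
        subst a; fval (2 : int); neg (eta r (r-1) (r-1)); apply: Phi1; lia.
      fval (1 : int); pos (eta r a (r-2)); apply: Phi1; lia.
    case: (eqVneq b (r-2)%N) => Hb3.
      subst b; fval ((-1) : int); pos (eta r a (r-1)); apply: Phi1; lia.
    fval (0 : int); pos (eta r a b); apply: Phi1; lia.
- case: (eqVneq b (r-1)%N) => Hb2.
    subst b; fval (2 : int); pos (vadd (eta r a (r-2)) (alpha r r)); apply: Phi2; lia.
  fval (1 : int); pos (vadd (eta r a r) (eta r b (r-2))); apply: Phi3; lia.
- have Hb2 : b != (r-1)%N by apply/eqP => E; subst b; rewrite HY in Hn.
  fval (1 : int); pos (vadd (eta r b r) (eta r b (r-2))); apply: Phi4; try lia.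
  by rewrite inS_setAdd ?HY //; lia.
Qed.
End SL2.


Section SL3.
Variable r : nat.
Hypothesis hr : (3 <= r)%N.


Ltac vsolve := move=> t Ht; rewrite ?vat_refl !vatE; dpll.
Ltac fval c := match goal with |- context [refl ?i ?f ?g] =>
  rewrite (_ : f = (c : int)); [| rewrite /fPL /fP1 /fSL /fS1 /fSr !vatE; dpll] end.
Ltac pos T := apply: (@in_pm_pos r _ _ T); [| vsolve].
Ltac neg T := apply: (@in_pm_neg r _ _ T); [| vsolve].




Lemma fwdE (Y : {set 'I_r}) :
  forall v, v \in Psi Y -> sigma (Psi Y) r v \in pm (Psi Y).
Proof.
move=> v; elim/Psi_ind => [a b Ha Hab Hb|a b Ha Hab Hb|b Ha Hb HY]; rewrite (rSr hr).
- case: (eqVneq b r) => Hbr.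
    subst b; case: (eqVneq a r) => Har.
      subst a; fval (2 : int); neg (eta r r r); apply: Psi1; lia.
    fval (1 : int); pos (eta r a (r-1)); apply: Psi1; lia.
  case: (eqVneq b (r-1)%N) => Hb2.
    subst b; fval ((-1) : int); pos (eta r a r); apply: Psi1; lia.
  fval (0 : int); pos (eta r a b); apply: Psi1; lia.
- fval (0 : int); pos (vadd (eta r a r) (eta r b (r-1))); apply: Psi2; lia.
- fval (0 : int); pos (vadd (eta r b r) (eta r b (r-1))); apply: Psi3; try lia; exact: HY.
Qed.

Lemma fwdF (Y : {set 'I_r}) : inS Y (r-1) ->
  forall v, v \in Psi Y -> sigma (Psi Y) (r-1) v \in pm (Psi Y).
Proof.
move=> HY1 v; elim/Psi_ind => [a b Ha Hab Hb|a b Ha Hab Hb|b Ha Hb HY]; rewrite (rS1 hr) /fS1 HY1.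
- case: (eqVneq b r) => Hbr.
    subst b; case: (eqVneq a r) => Har.
      subst a; fval ((-2) : int); pos (vadd (eta r (r-1) r) (eta r (r-1) (r-1))); apply: Psi3; try lia; exact: HY1.
    case: (eqVneq a (r-1)%N) => Ha2.
      subst a; fval (0 : int); pos (eta r (r-1) r); apply: Psi1; lia.
    fval ((-1) : int); pos (vadd (eta r a r) (eta r (r-1) (r-1))); apply: Psi2; lia.
  have Hb' : (b < r)%N by lia.
  clear Hbr Hb.
  case: (eqVneq b (r-1)%N) => Hb2.
    subst b; case: (eqVneq a (r-1)%N) => Ha2.
      subst a; fval (2 : int); neg (eta r (r-1) (r-1)); apply: Psi1; lia.
    fval (1 : int); pos (eta r a (r-2)); apply: Psi1; lia.
  case: (eqVneq b (r-2)%N) => Hb3.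
    subst b; fval ((-1) : int); pos (eta r a (r-1)); apply: Psi1; lia.
  fval (0 : int); pos (eta r a b); apply: Psi1; lia.
- case: (eqVneq b (r-1)%N) => Hb2.
    subst b; fval (1 : int); pos (eta r a r); apply: Psi1; lia.
  fval (0 : int); pos (vadd (eta r a r) (eta r b (r-1))); apply: Psi2; lia.
- case: (eqVneq b (r-1)%N) => Hb2.
    subst b; fval (2 : int); pos (eta r r r); apply: Psi1; lia.
  fval (0 : int); pos (vadd (eta r b r) (eta r b (r-1))); apply: Psi3; try lia; exact: HY.
Qed.

Lemma in_L (L : seq (vec r)) (w g : vec r) : g \in L ->
  (forall t, (1 <= t <= r)%N -> vat w t = vat g t) -> w \in L.
Proof. by move=> Hg H; rewrite (vec_ext H). Qed.

Ltac xsolve := move=> t Ht; rewrite (vat_xch hr) !vatE /swapn; dpll.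

Lemma xch_Phi (Z : {set 'I_r}) : forall v, v \in Phi Z -> xch v \in Phi Z.
Proof.
move=> v; elim/Phi_ind => [a b Ha Hab Hb|a Ha Hb|a b Ha Hab Hb|b Ha Hb HZ].
- case: (eqVneq b (r-1)%N) => Hb2.
    subst b; apply: (@in_L _ _ (vadd (eta r a (r-2)) (alpha r r))); [apply: Phi2; lia | xsolve].
  apply: (@in_L _ _ (eta r a b)); [apply: Phi1; lia | xsolve].
- apply: (@in_L _ _ (eta r a (r-1))); [apply: Phi1; lia | xsolve].
- apply: (@in_L _ _ (vadd (eta r a r) (eta r b (r-2)))); [apply: Phi3; lia | xsolve].
- apply: (@in_L _ _ (vadd (eta r b r) (eta r b (r-2)))); [apply: Phi4; try lia; exact: HZ | xsolve].
Qed.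

Lemma Phi_xch (Z : {set 'I_r}) : map (@xch r) (Phi Z) =i Phi Z.
Proof.
move=> v; rewrite (mem_xch hr); apply/idP/idP => H; first by rewrite -(xch_inv hr v); apply: xch_Phi.
exact: xch_Phi.
Qed.
End SL3.


Section SM.
Variable r : nat.
Hypothesis hr : (3 <= r)%N.


Ltac vsolve := move=> t Ht; rewrite ?vat_refl !vatE; dpll.
Ltac fval c := match goal with |- context [refl ?i ?f ?g] =>
  rewrite (_ : f = (c : int)); [| rewrite /fPL /fP1 /fSL /fS1 /fSr !vatE; dpll] end.
Ltac pos T := apply: (@in_pm_pos r _ _ T); [| vsolve].
Ltac neg T := apply: (@in_pm_neg r _ _ T); [| vsolve].





Lemma Phi_inS (Z1 Z2 : {set 'I_r}) : (forall t, (t < r)%N -> inS Z1 t = inS Z2 t) -> Phi Z1 = Phi Z2.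
Proof.
move=> H; rewrite /Phi; congr (_ ++ _ ++ _ ++ _); congr map.
apply: eq_in_filter => t; rewrite mem_iota => Ht; apply: H; lia.
Qed.
Lemma Psi_inS (Z1 Z2 : {set 'I_r}) : (forall t, (t < r)%N -> inS Z1 t = inS Z2 t) -> Psi Z1 = Psi Z2.
Proof.
move=> H; rewrite /Psi; congr (_ ++ _ ++ _); congr map.
apply: eq_in_filter => t; rewrite mem_iota => Ht; apply: H; lia.
Qed.

Lemma tsp_tsp (Z : {set 'I_r}) i t : (i.+1 < r)%N -> (t < r)%N -> inS (tsp i (tsp i Z)) t = inS Z t.
Proof.
move=> Hi Ht; rewrite inS_tsp // ?inS_tsp ?swK //; rewrite /swapn; dpll.
Qed.

Lemma xch_trans (L M : seq (vec r)) i : (1 <= i <= r)%N ->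
  sigmaPM L (swapn (r-1) i) =i pm M -> sigmaPM (map (@xch r) L) i =i pm (map (@xch r) M).
Proof. by move=> Hi H; rewrite (sigmaPM_xch hr) // (pm_xch hr); apply: eq_mem_map. Qed.

Lemma sw_low i : (i <= r - 2)%N -> swapn (r-1) i = i.
Proof. move=> H; rewrite /swapn; dpll. Qed.
Lemma sw_r : swapn (r-1) r = (r-1)%N.
Proof. rewrite /swapn; dpll. Qed.
Lemma sw_r1 : swapn (r-1) (r-1) = r.
Proof. rewrite /swapn; dpll. Qed.

Lemma Phi_r (Z : {set 'I_r}) M : sigmaPM (Phi Z) (r-1) =i pm M ->
  sigmaPM (Phi Z) r =i pm (map (@xch r) M).
Proof.
move=> H x.
have E : Phi Z =i map (@xch r) (Phi Z) by move=> y; rewrite (Phi_xch hr).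
have rr : (1 <= r <= r)%N by lia.
rewrite (sigmaPM_eqL E rr x).
apply: xch_trans => //.
by rewrite sw_r.
Qed.

Theorem main (Y Z : {set 'I_r}) :
  (forall i, (1 <= i <= r - 2)%N ->
     [/\ sigmaPM (Phi Z) i =i pm (Phi (tsp i Z)),
         sigmaPM (Psi Y) i =i pm (Psi (tsp i Y)) &
         sigmaPM (Psi' Y) i =i pm (Psi' (tsp i Y))]) /\
  (~~ inS Z (r - 1) ->
     sigmaPM (Phi Z) (r - 1) =i pm (Phi Z) /\ sigmaPM (Phi Z) r =i pm (Phi Z)) /\
  (inS Z (r - 1) ->
     sigmaPM (Phi Z) (r - 1) =i pm (Psi (setDel Z (r - 1))) /\
     sigmaPM (Phi Z) r =i pm (Psi' (setDel Z (r - 1)))) /\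
  (~~ inS Y (r - 1) ->
     [/\ sigmaPM (Psi Y) (r - 1) =i pm (Phi (setAdd Y (r - 1))),
         sigmaPM (Psi Y) r =i pm (Psi Y),
         sigmaPM (Psi' Y) r =i pm (Phi (setAdd Y (r - 1))) &
         sigmaPM (Psi' Y) (r - 1) =i pm (Psi' Y)]) /\
  (inS Y (r - 1) ->
     [/\ sigmaPM (Psi Y) (r - 1) =i pm (Psi Y),
         sigmaPM (Psi Y) r =i pm (Psi Y),
         sigmaPM (Psi' Y) (r - 1) =i pm (Psi' Y) &
         sigmaPM (Psi' Y) r =i pm (Psi' Y)]).
Proof.
have HPsiE : sigmaPM (Psi Y) r =i pm (Psi Y).
  apply: eq_from_fwd => //; first lia; exact: (fwdE hr).
have r1 : (1 <= r - 1 <= r)%N by lia.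
have rr : (1 <= r <= r)%N by lia.
split.
  move=> i Hi.
  have Hi' : (i.+1 < r)%N by lia.
  have HB : sigmaPM (Psi Y) i =i pm (Psi (tsp i Y)).
    apply: eq_from_fwd; first lia.
    - by move=> v; rewrite !(rSL hr).
    - exact: (fwdB hr).
    - move=> v Hv; have := fwdB hr Hi Hv.
      by rewrite (Psi_inS (Z1 := tsp i (tsp i Y)) (Z2 := Y)) // => t Ht; rewrite tsp_tsp.
  split => //.
  - apply: eq_from_fwd; first lia.
    + by move=> v; rewrite !(rPL hr).
    + exact: (fwdA hr).
    + move=> v Hv; have := fwdA hr Hi Hv.
      by rewrite (Phi_inS (Z1 := tsp i (tsp i Z)) (Z2 := Z)) // => t Ht; rewrite tsp_tsp.
  - rewrite /Psi'; apply: xch_trans; first lia.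
    by rewrite sw_low //; case/andP: Hi.
split.
  move=> Hn.
  have H1 : sigmaPM (Phi Z) (r - 1) =i pm (Phi Z).
    by apply: eq_from_fwd => //; exact: (fwdC hr).
  split => //.
  move=> x; rewrite (Phi_r H1 x); exact: (pm_eqL (Phi_xch hr Z)).
split.
  move=> HZ.
  have HZ' : inS (setDel Z (r-1)) (r-1) = false by rewrite inS_setDel eqxx andbF.
  have H1 : sigmaPM (Phi Z) (r - 1) =i pm (Psi (setDel Z (r - 1))).
    apply: eq_from_fwd => //.
    - by move=> v; rewrite (rP1 hr) (rS1 hr) /fP1 /fS1 HZ HZ'.
    - exact: (fwdD hr).
    - move=> v Hv; have := fwdD' hr (negbT HZ') Hv.
      rewrite (Phi_inS (Z2 := Z)) // => t Ht.
      rewrite inS_setAdd // inS_setDel; case: (eqVneq t (r-1)%N) => [->|]; by rewrite ?HZ ?orbT ?andbT ?orbF.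
  split => //; exact: Phi_r.
split.
  move=> Hn.
  have HY' : inS (setAdd Y (r-1)) (r-1) by rewrite inS_setAdd ?eqxx ?orbT //; lia.
  have H1 : sigmaPM (Psi Y) (r - 1) =i pm (Phi (setAdd Y (r - 1))).
    apply: eq_from_fwd => //.
    - by move=> v; rewrite (rP1 hr) (rS1 hr) /fP1 /fS1 (negbTE Hn) HY'.
    - exact: (fwdD' hr).
    - move=> v Hv; have := fwdD hr HY' Hv.
      rewrite (Psi_inS (Z2 := Y)) // => t Ht.
      rewrite inS_setDel inS_setAdd //; case: (eqVneq t (r-1)%N) => [->|]; by rewrite ?(negbTE Hn) ?andbF ?orbF ?andbT.
  split => //.
  - have H1' : sigmaPM (Psi Y) (swapn (r-1) r) =i pm (Phi (setAdd Y (r - 1))) by rewrite sw_r.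
    rewrite /Psi'; move=> x; rewrite (xch_trans rr H1' x).
    exact: (pm_eqL (Phi_xch hr _)).
  - rewrite /Psi'; apply: xch_trans => //; by rewrite sw_r1.
move=> HY.
have H1 : sigmaPM (Psi Y) (r - 1) =i pm (Psi Y).
  by apply: eq_from_fwd => //; exact: (fwdF hr).
split => //.
- rewrite /Psi'; apply: xch_trans => //; by rewrite sw_r1.
- rewrite /Psi'; apply: xch_trans => //; by rewrite sw_r.
Qed.
End SM.

Local Close Scope ring_scope.

Theorem proposition3p12 (r : nat) (Y Z : {set 'I_r}) :
  (3 <= r)%N ->
  (forall x, x \in Y -> (0 < val x)%N) ->
  (forall x, x \in Z -> (0 < val x)%N) ->
  (#|Y| < #|Z|)%N -> (#|Z| < r)%N ->
  (forall i, (1 <= i <= r - 2)%N ->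
     [/\ sigmaPM (Phi Z) i =i pm (Phi (tsp i Z)),
         sigmaPM (Psi Y) i =i pm (Psi (tsp i Y)) &
         sigmaPM (Psi' Y) i =i pm (Psi' (tsp i Y))]) /\
  (~~ inS Z (r - 1) ->
     sigmaPM (Phi Z) (r - 1) =i pm (Phi Z) /\ sigmaPM (Phi Z) r =i pm (Phi Z)) /\
  (inS Z (r - 1) ->
     sigmaPM (Phi Z) (r - 1) =i pm (Psi (setDel Z (r - 1))) /\
     sigmaPM (Phi Z) r =i pm (Psi' (setDel Z (r - 1)))) /\
  (~~ inS Y (r - 1) ->
     [/\ sigmaPM (Psi Y) (r - 1) =i pm (Phi (setAdd Y (r - 1))),
         sigmaPM (Psi Y) r =i pm (Psi Y),
         sigmaPM (Psi' Y) r =i pm (Phi (setAdd Y (r - 1))) &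
         sigmaPM (Psi' Y) (r - 1) =i pm (Psi' Y)]) /\
  (inS Y (r - 1) ->
     [/\ sigmaPM (Psi Y) (r - 1) =i pm (Psi Y),
         sigmaPM (Psi Y) r =i pm (Psi Y),
         sigmaPM (Psi' Y) (r - 1) =i pm (Psi' Y) &
         sigmaPM (Psi' Y) r =i pm (Psi' Y)]).
Proof. move=> hr _ _ _ _; exact: (main hr Y Z). Qed.
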